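(* Let $\lambda=(\lambda_1,\dots,\lambda_l)$ and $\mu=(\mu_1,\dots,\mu_m)$ be decompositions of $n$ with $\lambda_l=1$ and $\mu_m\ge 2$, and let $\mu'=(\mu_1,\dots,\mu_{m-1},\mu_m-1,1)$. Then the index of $P_{\lambda|\mu'}$ in $P_{\lambda|\mu}$ is $2^{\mu_m-1}$.
   Context: A decomposition of $N$ is a finite sequence of positive integers with sum $N$. For a decomposition $\lambda=(\lambda_1,\dots,\lambda_l)$ of $N$, $P_\lambda\le\mathrm{GL}_N(\mathbb{F}_2)$ is the standard parabolic subgroup of invertible block upper triangular matrices with diagonal blocks of sizes $\lambda_1,\dots,\lambda_l$ in this order. $P_\mu^t$ is the group of transposes of elements of $P_\mu$, and $P_{\lambda|\mu}=P_\lambda\cap P_\mu^t$. *)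

(* Defs.v *)
From mathcomp Require Import all_boot all_order all_algebra all_fingroup.
Set Implicit Arguments. Unset Strict Implicit. Unset Printing Implicit Defensive.
Local Open Scope ring_scope.

Definition decomposition (s : seq nat) (n : nat) : bool :=
  all (fun x => 0 < x)%N s && (sumn s == n).

(* Block index (0-based) of the 0-based row/column index i for the
   decomposition s: the number of partial sums s_1+...+s_k (k >= 1) that are <= i. *)
Definition blk (s : seq nat) (i : nat) : nat :=
  count (fun p => p <= i)%N [seq sumn (take k.+1 s) | k <- iota 0 (size s)].

Definition block_upper (m : nat) (s : seq nat) (A : 'M['F_2]_m) : bool :=
  [forall i : 'I_m, forall j : 'I_m, (blk s j < blk s i)%N ==> (A i j == 0)].

Definition parabolic (n : nat) (s : seq nat) : {set {'GL_n['F_2]}} :=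
  [set g : {'GL_n['F_2]} | block_upper s (GLval g)].

Definition parabolic_t (n : nat) (s : seq nat) : {set {'GL_n['F_2]}} :=
  [set g : {'GL_n['F_2]} | block_upper s (GLval g)^T].

Definition Pbar (n : nat) (lam mu : seq nat) : {set {'GL_n['F_2]}} :=
  parabolic n lam :&: parabolic_t n mu.

(* Main.v *)
Require Import Defs.
From mathcomp Require Import all_boot all_order all_algebra all_fingroup.
From mathcomp Require Import zify.
Set Implicit Arguments. Unset Strict Implicit. Unset Printing Implicit Defensive.
Import GRing.Theory.
Local Open Scope ring_scope.

Lemma blk_rcons t x i : blk (rcons t x) i = (blk t i + (sumn t + x <= i))%N.
Proof.
rewrite /blk size_rcons -addn1 iotaD map_cat count_cat /= add0n addn0.
congr (_ + _)%N.
  congr count; apply/eq_in_map => k; rewrite mem_iota add0n => /andP[_ hk].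
  rewrite -cats1 take_cat; case: ltnP => // h.
  have -> : k.+1 = size t by lia.
  by rewrite subnn take0 cats0 take_size.
by rewrite take_oversize ?size_rcons // sumn_rcons.
Qed.

Lemma blk_le_size t i : (blk t i <= size t)%N.
Proof. by rewrite /blk (leq_trans (count_size _ _)) // size_map size_iota. Qed.

Lemma sumn_take_le t k : (sumn (take k t) <= sumn t)%N.
Proof. by rewrite -{2}(cat_take_drop k t) sumn_cat leq_addr. Qed.

Lemma blk_ge t i : (sumn t <= i)%N -> blk t i = size t.
Proof.
move=> h; apply/eqP; rewrite -[X in _ == X](size_iota 0) -(size_map (fun k => sumn (take k.+1 t))).
rewrite -all_count; apply/allP => p /mapP [k _ ->].
exact: leq_trans (sumn_take_le _ _) h.
Qed.

Lemma blk_lt t i : (i < sumn t)%N -> (blk t i < size t)%N.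
Proof.
case/lastP: t => [//|t y]; rewrite blk_rcons sumn_rcons size_rcons => h.
have -> : (sumn t + y <= i)%N = false by apply/negbTE; rewrite -ltnNge.
by rewrite addn0 ltnS blk_le_size.
Qed.

Lemma block_upper1 m s : block_upper s (1%:M : 'M['F_2]_m).
Proof.
apply/forallP => i; apply/forallP => j; apply/implyP => h.
by rewrite mxE; case: (i =P j) h => [->|_]; rewrite ?ltnn.
Qed.

Lemma block_upperM m s (A B : 'M['F_2]_m) :
  block_upper s A -> block_upper s B -> block_upper s (A *m B).
Proof.
move=> /forallP hA /forallP hB; apply/forallP => i; apply/forallP => j; apply/implyP => h.
rewrite mxE big1 // => k _.
case: (ltnP (blk s k) (blk s i)) => hk.
  by have /forallP /(_ k) /implyP /(_ hk) /eqP -> := hA i; rewrite mul0r.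
have h2 : (blk s j < blk s k)%N by apply: leq_trans h hk.
by have /forallP /(_ j) /implyP /(_ h2) /eqP -> := hB k; rewrite mulr0.
Qed.

Lemma Pbar_group n lam mu : group_set (Pbar n lam mu).
Proof.
apply/group_setP; split.
  by rewrite !inE GL_1E trmx1 !block_upper1.
move=> x y; rewrite !inE => /andP[hx1 hx2] /andP[hy1 hy2].
by rewrite GL_MxE trmx_mul !block_upperM.
Qed.
Lemma F2_cases (x : 'F_2) : x = 0 \/ x = 1.
Proof. by case: x => [[|[|m]]] // h; [left|right]; apply: val_inj. Qed.
Lemma F2_addxx (x : 'F_2) : x + x = 0.
Proof. by case: (F2_cases x) => ->; [rewrite addr0 | apply: val_inj]. Qed.
Lemma test n (u : 'M['F_2]_n.+1) (hu : u \in unitmx) : GLval (Sub u hu : {'GL_n.+1['F_2]}) = u.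
Proof. by []. Qed.

Lemma PbarP n (s1 s2 : seq nat) (g : {'GL_n['F_2]}) :
  reflect ((forall i j : 'I_n.-1.+1, (blk s1 j < blk s1 i)%N -> GLval g i j = 0) /\
           (forall i j : 'I_n.-1.+1, (blk s2 j < blk s2 i)%N -> GLval g j i = 0))
          (g \in Pbar n s1 s2).
Proof.
rewrite !inE /block_upper; apply: (iffP andP) => [[/forallP h1 /forallP h2]|[h1 h2]]; split.
- by move=> i j h; have /forallP /(_ j) /implyP /(_ h) /eqP := h1 i.
- by move=> i j h; have /forallP /(_ j) /implyP /(_ h) /eqP := h2 i; rewrite mxE.
- by apply/forallP => i; apply/forallP => j; apply/implyP => h; rewrite h1.
- by apply/forallP => i; apply/forallP => j; apply/implyP => h; rewrite mxE h2.
Qed.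

Definition gact n' (v : 'cV['F_2]_n'.+1) (g : {'GL_n'.+1['F_2]}) : 'cV_n'.+1 :=
  GLval g^-1 *m v.

Lemma gact1 n' : (@gact n')^~ 1%g =1 id.
Proof. by move=> v; rewrite /gact invg1 GL_1E mul1mx. Qed.

Lemma gactM n' v : act_morph (@gact n') v.
Proof. by move=> a b; rewrite /gact invMg GL_MxE mulmxA. Qed.

Canonical gaction n' := TotalAction (@gact1 n') (@gactM n').

Lemma diag1 n' (tl : seq nat) s2 (g : {'GL_n'.+1['F_2]}) :
  sumn tl = n' -> g \in Pbar n'.+1 (rcons tl 1%N) s2 -> GLval g ord_max ord_max = 1.
Proof.
move=> htl /PbarP [h1 _].
case: (F2_cases (GLval g ord_max ord_max)) => // h0.
have hr : (delta_mx (0 : 'I_1) (ord_max : 'I_n'.+1) : 'rV['F_2]_n'.+1) *m GLval g = 0.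
  rewrite -rowE; apply/rowP => j; rewrite !mxE.
  case: (j =P ord_max) => [->|/eqP hj] //; apply: h1.
  rewrite !blk_rcons htl.
  have hx : forall x : 'I_n'.+1, (n' + 1 <= x)%N = false.
    by move=> x; apply/negbTE; rewrite -ltnNge addn1 ltn_ord.
  rewrite !hx.
  have hm : blk tl (@ord_max n') = size tl by apply: blk_ge; rewrite htl.
  rewrite !addn0 hm blk_lt // htl.
  have hl := ltn_ord j; have hne : (j : nat) <> n' by move=> e; move/eqP: hj; apply; apply: val_inj.
  lia.
have := congr1 (mulmx^~ (invmx (GLval g))) hr.
rewrite mulmxK ?GL_unitmx // mul0mx => /matrixP /(_ 0 ord_max).
by rewrite !mxE !eqxx.
Qed.

Lemma ord_neq n' (j : 'I_n'.+1) : j != ord_max -> (j < n')%N.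
Proof.
move=> hj; have hl := ltn_ord j.
have hne : (j : nat) <> n' by move=> e; move/eqP: hj; apply; apply: val_inj.
lia.
Qed.

Lemma F2mx_addxx a b (A : 'M['F_2]_(a, b)) : A + A = 0.
Proof. by apply/matrixP => i j; rewrite !mxE F2_addxx. Qed.

Lemma rank1E m (W : 'cV['F_2]_m) (f : 'I_m) i j :
  (1%:M + W *m (delta_mx f 0)^T) i j = (i == j)%:R + (j == f)%:R * W i 0.
Proof. by rewrite !mxE big_ord1 !mxE andbT mulrC. Qed.

Lemma aux m (X : 'cV['F_2]_m) f r :
  (r == f)%:R + (X - delta_mx f 0) r 0 = X r 0.
Proof.
rewrite !mxE; have -> : ((0 : 'I_1) == 0) = true by [].
by rewrite andbT addrCA subrr addr0.
Qed.

Section Main.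
Variables (n' k' : nat) (tl tm : seq nat).
Hypothesis htl : sumn tl = n'.
Hypothesis htm : (sumn tm + k'.+2 = n'.+1)%N.
Let lam := rcons tl 1%N.
Let mu := rcons tm k'.+2.
Let mu' := rcons (rcons tm k'.+1) 1%N.

Lemma hm (i : 'I_n'.+1) : blk mu i = blk tm i.
Proof.
rewrite /mu blk_rcons; have := ltn_ord i.
by case: leqP => // h1 h2; lia.
Qed.

Lemma hm' (i : 'I_n'.+1) : blk mu' i = (blk tm i + (i == ord_max))%N.
Proof.
rewrite /mu' !blk_rcons sumn_rcons; have hi0 := ltn_ord i.
have -> : (sumn tm + k'.+1 + 1 <= i)%N = false by apply/negbTE; rewrite -ltnNge; lia.
rewrite addn0; congr (_ + _)%N.
case: (i =P ord_max) => [->|/eqP hi] /=.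
  by have -> : (sumn tm + k'.+1 <= n')%N by lia.
have := ord_neq hi => h1.
by have -> : (sumn tm + k'.+1 <= i)%N = false by apply/negbTE; rewrite -ltnNge; lia.
Qed.

Lemma hmm : blk tm (@ord_max n') = size tm.
Proof. by apply: blk_ge => /=; lia. Qed.

Lemma hmlt (i : 'I_n'.+1) : (blk tm i < size tm)%N = (i < sumn tm)%N.
Proof.
case: (ltnP i (sumn tm)) => h; first exact: blk_lt.
by rewrite blk_ge // ltnn.
Qed.


Let e : 'cV['F_2]_n'.+1 := delta_mx ord_max 0.
Let G := Group (Pbar_group n'.+1 lam mu).

Lemma hlam (i : 'I_n'.+1) : blk lam i = blk tl i.
Proof.
rewrite /lam blk_rcons; have := ltn_ord i.
by case: leqP => // h1 h2; lia.
Qed.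

Lemma mulE (g : 'M['F_2]_n'.+1) r : (g *m e) r 0 = g r ord_max.
Proof. by rewrite -colE !mxE. Qed.

Lemma stabE : Pbar n'.+1 lam mu' = ('C_G[e | gaction n'])%g.
Proof.
apply/setP => g; rewrite [in RHS]in_setI; apply/idP/andP.
- move=> /PbarP [h1 h2].
  have hA : g \in G.
    apply/PbarP; split => // i j hij; apply: h2; rewrite !hm' -!hm.
    have hj : (j == ord_max) = false.
      apply/negbTE; apply: contraTneq hij => ->.
      by rewrite !hm hmm -leqNgt blk_le_size.
    by rewrite hj addn0 (leq_trans hij (leq_addr _ _)).
  split => //; apply/astab1P.
  have He : GLval g *m e = e.
    apply/colP => r; rewrite mulE !mxE andbT.
    case: (r =P ord_max) => [->|/eqP hr]; first exact: (diag1 htl hA).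
    apply: h2; rewrite !hm' hmm (negbTE hr) eqxx addn0 addn1 ltnS.
    exact: blk_le_size.
  by rewrite /= /gact GL_VxE -{1}He (mulKmx (GL_unitmx g)).
- move=> [hA /astab1P hs].
  have He : GLval g *m e = e.
    have := congr1 (mulmx (GLval g)) hs; rewrite /= /gact GL_VxE (mulKVmx (GL_unitmx g)).
    by move=> <-.
  have hc r : GLval g r ord_max = (r == ord_max)%:R.
    by have /matrixP /(_ r 0) := He; rewrite mulE !mxE andbT.
  case/PbarP: hA => h1 h2; apply/PbarP; split => // i j; rewrite !hm'.
  case: (i =P ord_max) => [->|/eqP hi].
    case: (j =P ord_max) => [->|/eqP hj]; first by rewrite ltnn.
    by rewrite hc (negbTE hj).
  rewrite addn0 => h; apply: h2; rewrite !hm.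
  exact: leq_ltn_trans (leq_addr _ _) h.
Qed.


Let Fw (w : 'rV['F_2]_k'.+1) : 'cV['F_2]_n'.+1 :=
  \col_r (if (sumn tm <= r < sumn tm + k'.+1)%N then w 0 (inord (r - sumn tm))
          else (r == ord_max)%:R).

Lemma Fw_inj : injective Fw.
Proof.
move=> w1 w2 h; apply/rowP => j.
have hj : (sumn tm + j < n'.+1)%N by have := ltn_ord j; lia.
have := congr1 (fun v : 'cV_n'.+1 => v (Ordinal hj) 0) h; rewrite !mxE /=.
rewrite leq_addr ltn_add2l ltn_ord /= addKn.
have -> : (inord j : 'I_k'.+1) = j by apply: val_inj; rewrite /= inordK.
by [].
Qed.

Lemma orbit_eq : orbit (gaction n') G e = Fw @: setT.
Proof.
apply/setP => v; apply/idP/idP.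
- move=> /orbitP [a ha <-].
  have hb : (a^-1)%g \in G by rewrite groupV.
  apply/imsetP; exists (\row_(j < k'.+1) GLval (a^-1)%g (inord (sumn tm + j)) ord_max) => //.
  apply/colP => r; rewrite /= /gact mulE !mxE.
  case: ifP => hr.
    move/andP: hr => [hr1 hr2].
    have hrk : (r - sumn tm < k'.+1)%N by lia.
    have -> : (inord (sumn tm + (inord (r - sumn tm) : 'I_k'.+1)) : 'I_n'.+1) = r.
      apply: val_inj; rewrite /= (inordK hrk) inordK; lia.
    by [].
  case: (r =P ord_max) => [->|/eqP hrm]; first exact: (diag1 htl hb).
  have hrs : (r < sumn tm)%N.
    have := ord_neq hrm; move/negbT: hr; rewrite negb_and -ltnNge -leqNgt; lia.
  case/PbarP: hb => _ h2; apply: h2; rewrite !hm hmm hmlt //.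
- move=> /imsetP [w _ ->].
  set W := Fw w - e.
  set u : 'M['F_2]_n'.+1 := 1%:M + W *m e^T.
  have hW : e^T *m W = 0.
    rewrite /e trmx_delta -rowE; apply/rowP => j; rewrite !mxE /= ord1.
    have -> : (sumn tm <= n' < sumn tm + k'.+1)%N = false by apply/negbTE; lia.
    by rewrite (eq_refl (@ord_max n')) subrr.
  have huu : u *m u = 1%:M.
    rewrite /u mulmxDl mul1mx mulmxDr mulmx1 -!mulmxA (mulmxA e^T W) hW mul0mx mulmx0 addr0.
    by rewrite -addrA F2mx_addxx addr0.
  have hu : u \in unitmx by case: (mulmx1_unit huu).
  have hiu : invmx u = u.
    by rewrite -[RHS](mulKmx hu u) huu mulmx1.
  pose gu : {'GL_n'.+1['F_2]} := Sub u hu.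
  have hui i j : u i j = (i == j)%:R + (j == ord_max)%:R * W i 0.
    exact: rank1E.
  have hue r : (u *m e) r 0 = Fw w r 0.
    rewrite mulE hui (eq_refl (@ord_max n')) mulr1n mul1r /W .
    exact: aux.
  apply/orbitP; exists gu.
    apply/PbarP; split => i j h; rewrite /= hui.
      have hij : (i == j) = false by apply/negbTE; apply: contraTneq h => ->; rewrite ltnn.
      have hjm : (j == ord_max) = false.
        apply/negbTE; apply: contraTneq h => ->; rewrite !hlam -leqNgt.
        by rewrite (@blk_ge tl (@ord_max n')) ?htl // blk_le_size.
      by rewrite hij hjm mul0r addr0.
    have hij : (j == i) = false by apply/negbTE; apply: contraTneq h => ->; rewrite ltnn.
    rewrite hij add0r; case: (i =P ord_max) => [ei|_]; last by rewrite mul0r.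
    move: h; rewrite ei !hm hmm hmlt => hj.
    have hjm : (j == ord_max) = false.
      by apply/negbTE; apply: contraTneq hj => ->; rewrite -leqNgt /=; lia.
    rewrite /W !mxE hjm subr0 mul1r.
    have -> : (sumn tm <= j)%N = false by rewrite leqNgt hj.
    by [].
  apply/colP => r; rewrite /= /gact GL_VxE /= hiu hue //.
Qed.

End Main.

Lemma main_index n' k' tl tm : sumn tl = n' -> (sumn tm + k'.+2 = n'.+1)%N ->
  #|Pbar n'.+1 (rcons tl 1%N) (rcons tm k'.+2) :
    Pbar n'.+1 (rcons tl 1%N) (rcons (rcons tm k'.+1) 1%N)|%g = (2 ^ k'.+1)%N.
Proof.
move=> htl htm.
rewrite (stabE htl htm).
change (#|Group (Pbar_group n'.+1 (rcons tl 1%N) (rcons tm k'.+2)) :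
   ('C_(Group (Pbar_group n'.+1 (rcons tl 1%N) (rcons tm k'.+2)))[delta_mx ord_max 0 | gaction n'])|%g = (2 ^ k'.+1)%N).
rewrite -card_orbit (orbit_eq htl htm) (card_imset _ (Fw_inj htl htm)) cardsT card_mx card_Fp //=.
by rewrite mul1n.
Qed.

Theorem corollary2 (n : nat) (lam mu : seq nat) :
  decomposition lam n -> decomposition mu n ->
  last 0%N lam = 1%N -> (2 <= last 0%N mu)%N ->
  let mu' := rcons (rcons (take (size mu).-1 mu) (last 0%N mu).-1) 1%N in
  #|Pbar n lam mu : Pbar n lam mu'|%g = (2 ^ (last 0%N mu).-1)%N.
Proof.
case/lastP: lam => [|tl x]; first by [].
case/lastP: mu => [|tm y]; first by [].
rewrite /decomposition !last_rcons !sumn_rcons size_rcons /=.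
move=> /andP[_ /eqP hl] /andP[_ /eqP hm] hx hy; subst x.
have -> : take (size tm) (rcons tm y) = tm by rewrite -cats1 take_size_cat.
case: y hy hm => [|[|k']] // _ hm.
case: n hl hm => [|n'] hl hm; first by rewrite addn1 in hl.
have htl : sumn tl = n' by lia.
exact: main_index.
Qed.
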